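(* Let $I\subseteq\mathbb{R}$ be an interval, $p\in\mathbb{N}$, $\mathbf{d}=(d_1,\dots,d_p)\in\mathbb{N}^p$, $\alpha\in\mathbb{N}_p^{\mathbf{d}}$, and let $\mathbf{M}=(M_1,\dots,M_p)$ be a $\mathbf{d}$-averaging mapping on $I$ such that every $M_i$ is continuous and strict. Then there exists a unique $\mathbf{M}_\alpha$-invariant mean $K\colon I^p\to I$ if and only if the root graph $\mathcal{R}(G_\alpha)$ is ergodic.
   Context: A $k$-variable mean on an interval $I$ is a function $M\colon I^k\to I$ with $\min(x)\le M(x)\le\max(x)$ for all $x\in I^k$; it is strict if both inequalities are strict for every nonconstant $x$. A function $K\colon I^p\to I$ is $\mathbf{F}$-invariant for a map $\mathbf{F}\colon I^p\to I^p$ if $K\circ\mathbf{F}=K$. Notation: $\mathbb{N}_p=\{1,\dots,p\}$, $\mathbb{N}_p^{\mathbf{d}}=\mathbb{N}_p^{d_1}\times\dots\times\mathbb{N}_p^{d_p}$. A $\mathbf{d}$-averaging mapping on $I$ is a sequence $(M_1,\dots,M_p)$ where each $M_i$ is a $d_i$-variable mean on $I$. For $\alpha=(\alpha_1,\dots,\alpha_p)\in\mathbb{N}_p^{\mathbf{d}}$, $\alpha_i=(\alpha_{i,1},\dots,\alpha_{i,d_i})$, define $\mathbf{M}_\alpha\colon I^p\to I^p$ by $\mathbf{M}_\alpha(x)=\big(M_i(x_{\alpha_{i,1}},\dots,x_{\alpha_{i,d_i}})\big)_{i=1}^p$. The $\alpha$-incidence graph is $G_\alpha=(\mathbb{N}_p,E_\alpha)$,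 $E_\alpha=\{(\alpha_{i,j},i): i\in\mathbb{N}_p, j\in\mathbb{N}_{d_i}\}$. A digraph is ergodic if it is nonempty, irreducible (walks exist between any two vertices) and aperiodic (no integer $k>1$ divides the length of every cycle). The root $R(G)$ of a digraph $G$ is the union of the strongly connected components (classes of mutual reachability) that receive no edge from a vertex of another component; the root graph $\mathcal{R}(G)$ is the subgraph of $G$ induced by $R(G)$. *)

(* Defs.v *)
From HB Require Import structures.
From mathcomp Require Import all_boot all_order all_algebra.
From mathcomp Require Import reals.
Set Implicit Arguments. Unset Strict Implicit. Unset Printing Implicit Defensive.
Import Order.TTheory GRing.Theory Num.Theory.
Local Open Scope ring_scope.

Section Defs.
Variable R : realType.

Definition is_interval (I : R -> Prop) : Prop :=
  (forall x y z, I x -> I z -> x <= y -> y <= z -> I y) /\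
  (exists a b, I a /\ I b /\ a < b).

Definition inI (I : R -> Prop) (k : nat) (x : 'I_k -> R) : Prop :=
  forall j, I (x j).

(* min(x) and max(x) of a finite family (the seed 'head' is one of the x j's
   when k > 0, so it does not affect the value). *)
Definition vmin (k : nat) (x : 'I_k -> R) : R :=
  \big[Num.min/head 0 [seq x j | j <- enum 'I_k]]_(j < k) x j.
Definition vmax (k : nat) (x : 'I_k -> R) : R :=
  \big[Num.max/head 0 [seq x j | j <- enum 'I_k]]_(j < k) x j.

Definition is_mean (I : R -> Prop) (k : nat) (M : ('I_k -> R) -> R) : Prop :=
  forall x, inI I x -> I (M x) /\ vmin x <= M x /\ M x <= vmax x.

Definition nonconstant (k : nat) (x : 'I_k -> R) : Prop :=
  exists j j', x j != x j'.

Definition is_strict_mean (I : R -> Prop) (k : nat) (M : ('I_k -> R) -> R) : Prop :=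
  is_mean I M /\
  forall x, inI I x -> nonconstant x -> vmin x < M x /\ M x < vmax x.

Definition continuous_on_Ik (I : R -> Prop) (k : nat) (M : ('I_k -> R) -> R) : Prop :=
  forall x, inI I x -> forall eps : R, 0 < eps -> exists2 delta : R, 0 < delta &
    forall y, inI I y -> (forall j, `|y j - x j| < delta) -> `|M y - M x| < eps.

Definition Malpha (p : nat) (d : 'I_p -> nat)
  (M : forall i : 'I_p, ('I_(d i) -> R) -> R)
  (alpha : forall i : 'I_p, 'I_(d i) -> 'I_p) (x : 'I_p -> R) : 'I_p -> R :=
  fun i => M i (fun j => x (alpha i j)).

Definition is_invariant (I : R -> Prop) (p : nat) (F : ('I_p -> R) -> ('I_p -> R))
  (K : ('I_p -> R) -> R) : Prop :=
  forall x, inI I x -> K (F x) = K x.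

End Defs.

Definition incidence_rel (p : nat) (d : 'I_p -> nat)
  (alpha : forall i : 'I_p, 'I_(d i) -> 'I_p) : rel 'I_p :=
  fun a b => [exists j : 'I_(d b), alpha b j == a].

Section Graphs.
Variable T : finType.

Definition scc (E : rel T) (v : T) : {set T} :=
  [set u | connect E u v && connect E v u].

(* root R(G): union of the strongly connected components receiving no edge
   from a vertex of another component *)
Definition root_set (E : rel T) : {set T} :=
  [set v | [forall a, forall b,
      (E a b && (b \in scc E v)) ==> (a \in scc E v)]].

Definition walk_in (V : {set T}) (E : rel T) (a : T) (s : seq T) : bool :=
  (a \in V) && path (fun x y => E x y && (y \in V)) a s.

(* ergodic digraph (V, E restricted to V): nonempty, irreducible, aperiodic;
   cycles are closed walks of positive length *)
Definition ergodic (V : {set T}) (E : rel T) : Prop :=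
  [/\ V != set0,
      (forall a b, a \in V -> b \in V ->
         exists s, walk_in V E a s /\ last a s = b) &
      (forall k : nat, (1 < k)%N ->
         exists a s, [/\ walk_in V E a s, last a s = a, (0 < size s)%N
                       & ~~ (k %| size s)%N])].

End Graphs.

(* Main.v *)
From HB Require Import structures.
From mathcomp Require Import all_boot all_order all_algebra.
From mathcomp Require Import reals.
From mathcomp Require Import boolp classical_sets topology normedtype sequences.
From mathcomp Require Import zify lra.
From Stdlib Require Import Classical.
Require Import Defs.
Import Order.TTheory GRing.Theory Num.Theory numFieldNormedType.Exports.
Local Open Scope ring_scope.
Unset Printing Implicit Defensive.

Unset Implicit Arguments.

Lemma bw1 (R : realType) (u : nat -> R) (C : R) : (forall n, `|u n| <= C) ->
  exists f : nat -> nat, (forall n m, (n < m)%N -> (f n < f m)%N) /\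
   exists l : R, forall e, 0 < e -> exists N, forall n, (N <= n)%N -> `|u (f n) - l| < e.
Proof.
move=> HC.
have [f finc fl] : exists2 f : nat -> nat, increasing_seq f & cvgn (u \o f).
  apply: bolzano_weierstrass.
  exists C; split; first by rewrite num_real.
  move=> x Cx y _ /=. by apply: le_trans (HC y) (ltW Cx).
exists f; split.
  move=> n m nm; rewrite ltnNge; have -> : (f m <= f n)%N = (m <= n)%N by exact: finc.
  by rewrite -ltnNge.
exists (limn (u \o f)) => e e0.
move: fl => /cvgrPdistC_lt /(_ e e0).
case=> N _ HN; exists N => n Nn; exact: HN.
Qed.

Lemma incr_ge (f : nat -> nat) : (forall n m, (n < m)%N -> (f n < f m)%N) -> forall n, (n <= f n)%N.
Proof.
move=> fi; elim=> // n IH. apply: leq_ltn_trans IH _. exact: fi.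
Qed.

Lemma bws (R : realType) (T : eqType) (u : nat -> T -> R) (C : R) :
  (forall n j, `|u n j| <= C) -> forall s : seq T,
  exists f : nat -> nat, (forall n m, (n < m)%N -> (f n < f m)%N) /\
   exists y : T -> R, forall e, 0 < e -> exists N, forall n, (N <= n)%N ->
     forall j, j \in s -> `|u (f n) j - y j| < e.
Proof.
move=> HC; elim=> [|j0 s [f [fi [y Hy]]]].
  exists id; split => //; exists (fun=> 0) => e e0; exists 0%N => n _ j.
  by rewrite in_nil.
have [g [gi [l Hl]]] := @bw1 R _ C (fun n => HC (f n) j0).
exists (f \o g); split.
  move=> n m nm /=; apply: fi; exact: gi.
exists (fun j => if j == j0 then l else y j) => e e0.
have [N1 HN1] := Hy e e0.
have [N2 HN2] := Hl e e0.
exists (maxn N1 N2) => n Nn j; rewrite in_cons.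
case: eqP => [-> _|_ /= js]; first by apply: HN2; exact: leq_trans (leq_maxr _ _) Nn.
apply: (HN1 (g n)) => //; apply: leq_trans _ (incr_ge _ gi n).
exact: leq_trans (leq_maxl _ _) Nn.
Qed.

Lemma bwv (R : realType) (T : finType) (u : nat -> T -> R) (C : R) :
  (forall n j, `|u n j| <= C) ->
  exists y : T -> R, forall e, 0 < e -> forall N, exists n, (N <= n)%N /\
     forall j, `|u n j - y j| < e.
Proof.
move=> HC; have [f [fi [y Hy]]] := @bws R T u C HC (enum T).
exists y => e e0 N; have [N1 HN1] := Hy e e0.
exists (f (maxn N N1)); split.
  exact: leq_trans (leq_maxl _ _) (incr_ge _ fi _).
move=> j; apply: HN1; [exact: leq_maxr | by rewrite mem_enum].
Qed.

Set Implicit Arguments. Unset Strict Implicit.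

Local Close Scope ring_scope.
Section G.
Variable T : finType.
Variable E : rel T.

Fixpoint reach (n : nat) (u v : T) : Prop :=
  match n with 0 => u = v | n'.+1 => exists w, reach n' u w /\ E w v end.

Lemma reach_cat m n u w v : reach m u w -> reach n w v -> reach (m + n) u v.
Proof.
move=> Hm; elim: n v => [|n IH] v /=; first by rewrite addn0 => <-.
by case=> w' [Hw' Ew']; rewrite addnS; exists w'; split => //; apply: IH.
Qed.

Lemma reach1 u v : E u v -> reach 1 u v.
Proof. by move=> Euv; exists u. Qed.

Lemma reach_path u s : path E u s -> reach (size s) u (last u s).
Proof.
elim: s u => [|y s IH] u /=; first by [].
case/andP=> Euy Hp; have := reach_cat (reach1 Euy) (IH _ Hp).
by rewrite add1n.
Qed.

Lemma reach_to_path n u v : reach n u v ->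
  exists s, [/\ path E u s, last u s = v & size s = n].
Proof.
elim: n v => [|n IH] v /=; first by move=> ->; exists [::].
case=> w [/IH [s [Hp Hl Hs]] Ewv]; exists (rcons s v).
by rewrite rcons_path last_rcons size_rcons Hp Hl Ewv Hs.
Qed.

Lemma connect_reach u v : connect E u v -> exists n, reach n u v.
Proof.
case/connectP=> s Hp ->; exists (size s); exact: reach_path.
Qed.

Lemma reach_connect n u v : reach n u v -> connect E u v.
Proof.
case/reach_to_path=> s [Hp Hl _]; apply/connectP; exists s => //.
Qed.

Lemma reach_split n m u v : (m <= n)%N -> reach n u v ->
  exists w, reach m u w /\ reach (n - m) w v.
Proof.
elim: n v => [|n IH] v.
  by rewrite leqn0 => /eqP -> /= ->; exists v.
rewrite leq_eqVlt => /orP [/eqP -> H|]; first by exists v; rewrite subnn.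
rewrite ltnS => mn /= [w [Hw Ewv]].
have [w' [H1 H2]] := IH _ mn Hw; exists w'; split => //.
rewrite subSn //; exists w; split => //.
Qed.

Lemma in_scc u v : (u \in scc E v) = connect E u v && connect E v u.
Proof. by rewrite inE. Qed.

Lemma scc_refl v : v \in scc E v.
Proof. by rewrite in_scc connect0. Qed.

Lemma root_pred v a b : v \in root_set E -> E a b -> b \in scc E v -> a \in scc E v.
Proof.
rewrite inE => /forallP /(_ a) /forallP /(_ b) /implyP H Eab Hb.
by apply: H; rewrite Eab Hb.
Qed.

Lemma root_path b w s : b \in root_set E -> path E w s -> last w s = b -> w \in scc E b.
Proof.
move=> Hb; elim: s w => [|y s IH] w /=; first by move=> _ ->; exact: scc_refl.
case/andP=> Ewy Hp Hl; apply: root_pred Hb Ewy _; exact: IH.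
Qed.

Lemma root_anc b w : b \in root_set E -> connect E w b -> w \in scc E b.
Proof. by move=> Hb /connectP [s Hp Hl]; apply: root_path Hb Hp (esym Hl). Qed.

Lemma scc_sym u v : u \in scc E v -> v \in scc E u.
Proof. by rewrite !in_scc andbC. Qed.

Lemma scc_trans u v w : u \in scc E v -> v \in scc E w -> u \in scc E w.
Proof.
rewrite !in_scc => /andP [a1 a2] /andP [b1 b2].
by rewrite (connect_trans a1 b1) (connect_trans b2 a2).
Qed.

Lemma scc_root u v : v \in root_set E -> u \in scc E v -> u \in root_set E.
Proof.
move=> Hv Hu; rewrite inE; apply/forallP => a; apply/forallP => b; apply/implyP.
case/andP=> Eab Hb.
have Hbv : b \in scc E v by apply: scc_trans Hb Hu.
have := root_pred Hv Eab Hbv => Hav.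
apply: scc_trans Hav (scc_sym Hu).
Qed.

Definition anc (v : T) := [set u | connect E u v].

Lemma exists_root_anc i : exists2 r, r \in root_set E & connect E r i.
Proof.
have Hi : connect E i i := connect0 _ _.
case: (@arg_minnP T i (fun v => connect E v i) (fun v => #|anc v|) Hi) => v Hvi Hmin.
exists v; last exact: Hvi.
rewrite inE; apply/forallP => a; apply/forallP => b; apply/implyP.
case/andP=> Eab Hb; rewrite in_scc; move: Hb; rewrite in_scc => /andP [bv vb].
have av : connect E a v := connect_trans (connect1 Eab) bv.
rewrite av /=.
have sub : anc a \subset anc v.
  apply/fintype.subsetP => u; rewrite !inE => ua; exact: connect_trans ua av.
have ai : connect E a i := connect_trans av Hvi.
have := Hmin a ai => le.
have eqs : anc a = anc v by apply/eqP; rewrite eqEcard sub le.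
have : v \in anc a by rewrite eqs inE connect0.
by rewrite inE.
Qed.


Notation V := (root_set E).

Lemma walk_reach (W : {set T}) a s : walk_in W E a s -> reach (size s) a (last a s).
Proof.
case/andP=> _ Hp; apply: reach_path; apply: sub_path Hp => x y /andP [].
done.
Qed.

Lemma path_walk a s b : b \in V -> path E a s -> last a s = b -> walk_in V E a s.
Proof.
move=> Hb; elim: s a => [|y s IH] a /=.
  by move=> _ ->; rewrite /walk_in Hb.
case/andP=> Eay Hp Hl.
have /andP [yV Hw] := IH _ Hp Hl.
have ya : a \in scc E b by apply: (@root_path b a (y :: s)) => //=; rewrite Eay Hp.
rewrite /walk_in /= Eay yV Hw (scc_root Hb ya) //.
Qed.

Lemma reach_walk n a b : b \in V -> reach n a b ->
  exists s, [/\ walk_in V E a s, last a s = b & size s = n].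
Proof.
move=> Hb /reach_to_path [s [Hp Hl Hs]]; exists s; split => //.
exact: path_walk Hb Hp Hl.
Qed.

Lemma reach_mul r m n : reach m r r -> reach (n * m) r r.
Proof.
move=> H; elim: n => [|n IH] //=; rewrite mulSn; exact: reach_cat H IH.
Qed.

Lemma primitive : ergodic V E -> exists2 r0, r0 \in V &
  forall s : seq T, exists N, forall n, (N <= n)%N -> forall i, i \in s -> reach n r0 i.
Proof.
case=> /set0Pn [r0 r0V] Hirr Hap; exists r0 => //.
pose S n := reach n r0 r0.
have Sadd m n : S m -> S n -> S (m + n) by exact: reach_cat.
have Hcyc : forall a c, a \in V -> reach c a a ->
    exists l, S l /\ S (l + c).
  move=> a c aV Hc.
  have [s1 [w1 l1]] := Hirr r0 a r0V aV.
  have [s2 [w2 l2]] := Hirr a r0 aV r0V.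
  have R1 := walk_reach w1; rewrite l1 in R1.
  have R2 := walk_reach w2; rewrite l2 in R2.
  exists (size s1 + size s2); split; first exact: reach_cat R1 R2.
  have := reach_cat (reach_cat R1 Hc) R2.
  by rewrite -addnA (addnC c) addnA.
have Hnd : forall k, (1 < k)%N -> exists e, S e /\ ~~ (k %| e)%N.
  move=> k k1; have [a [s [Hw Hl Hs Hk]]] := Hap k k1.
  have aV : a \in V by case/andP: Hw.
  have Rc := walk_reach Hw; rewrite Hl in Rc.
  have [l [Sl Slc]] := Hcyc a _ aV Rc.
  case Hkl: (k %| l)%N; last by exists l; rewrite Hkl.
  exists (l + size s); split => //; by rewrite dvdn_addr.
have Hex : exists d, (0 < d)%N /\ exists Q, S Q /\ S (Q + d).
  have [e [Se He]] := Hnd 2%N isT.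
  exists e; split; last by exists 0%N; split => //.
  by case: e Se He.
have Hred : forall g, (0 < g)%N -> (exists Q, S Q /\ S (Q + g)) ->
    exists Q, S Q /\ S (Q + 1).
  elim/ltn_ind => g IHg g0 [Q [SQ SQg]].
  case: (ltngtP g 1) => g1; first by move: g0; rewrite ltnNge -ltnS g1.
    have [e [Se He]] := Hnd g g1.
    case: (egcdnP e g0) => km kn Heq _.
    have Sg : S (km * Q + kn * e + gcdn g e).
      by rewrite -addnA -Heq -mulnDr; apply: reach_mul.
    have Sq : S (km * Q + kn * e) by apply: Sadd; apply: reach_mul.
    have gpos : (0 < gcdn g e)%N by rewrite gcdn_gt0 g0.
    apply: (IHg (gcdn g e)) => //; last by exists (km * Q + kn * e)%N.
    rewrite ltn_neqAle dvdn_leq ?dvdn_gcdl // andbT.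
    apply: contraNN He => /eqP Hge; move: (dvdn_gcdr g e); by rewrite Hge.
  by exists Q; rewrite -g1.
have [Q [SQ SQg]] : exists Q, S Q /\ S (Q + 1).
  by case: Hex => g [g0 HQ]; exact: Hred g0 HQ.
have Sbig : forall n, (Q * Q <= n)%N -> S n.
  move=> n Hn; case: (posnP Q) => [Q0|Qp].
    move: SQg; rewrite Q0 add0n => S1; rewrite -(muln1 n); exact: reach_mul.
  rewrite (divn_eq n Q).
  set q := (n %/ Q)%N; set r := (n %% Q)%N.
  have rQ : (r < Q)%N by rewrite ltn_mod.
  have Qq : (Q <= q)%N by rewrite leq_divRL.
  have rq : (r <= q)%N by apply: ltnW; exact: leq_trans rQ Qq.
  have -> : (q * Q + r = (q - r) * Q + r * (Q + 1))%N.
    rewrite mulnDr muln1 addnA -mulnDl subnK //.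
  apply: Sadd; apply: reach_mul => //.
have Hv : forall i, exists N, forall n, (N <= n)%N -> reach n r0 i.
  move=> i; have [r1 r1V /connect_reach [t Ht]] := exists_root_anc i.
  have [s1 [w1 l1]] := Hirr r0 r1 r0V r1V.
  have R1 := walk_reach w1; rewrite l1 in R1.
  exists (Q * Q + (size s1 + t))%N => n Hn.
  have -> : n = (n - (size s1 + t) + (size s1 + t))%N.
    by rewrite subnK //; apply: leq_trans Hn; exact: leq_addl.
  rewrite addnA; apply: reach_cat Ht; apply: reach_cat R1; apply: Sbig.
  lia.
elim=> [|i s [N HN]]; first by exists 0%N.
have [Ni HNi] := Hv i.
exists (maxn N Ni) => n Hn j; rewrite in_cons => /orP [/eqP ->|js].
  by apply: HNi; exact: leq_trans (leq_maxr _ _) Hn.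
by apply: HN => //; exact: leq_trans (leq_maxl _ _) Hn.
Qed.


Lemma not_irr a b : b \in V ->
  ~ (exists s, walk_in V E a s /\ last a s = b) -> ~~ connect E a b.
Proof.
move=> bV Hn; apply/negP => /connectP [s Hp Hl]; apply: Hn; exists s; split => //.
exact: path_walk bV Hp (esym Hl).
Qed.

Lemma scc_disj a b w : ~~ connect E a b -> w \in scc E a -> w \in scc E b -> False.
Proof.
move=> /negP H; rewrite !in_scc => /andP [_ aw] /andP [wb _]; apply: H.
exact: connect_trans aw wb.
Qed.

Section Periodic.
Variable k : nat.
Hypothesis k1 : (1 < k)%N.
Hypothesis Hper : forall a s, walk_in V E a s -> last a s = a -> (0 < size s)%N ->
  (k %| size s)%N.
Variable r0 : T.
Hypothesis r0V : r0 \in V.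

Definition ph v m := exists n, reach n r0 v /\ n = m %[mod k].

Lemma closed_dvd n : reach n r0 r0 -> (k %| n)%N.
Proof.
move=> /(reach_walk r0V) [s [Hw Hl Hs]]; case: (posnP n) => [->|np].
  exact: dvdn0.
by rewrite -Hs; apply: Hper Hw Hl _; rewrite Hs.
Qed.

Lemma G1 v n1 n2 : v \in scc E r0 -> reach n1 r0 v -> reach n2 r0 v -> n1 = n2 %[mod k].
Proof.
rewrite in_scc => /andP [vr _] H1 H2.
have [l Hl] := connect_reach vr.
have d1 := closed_dvd (reach_cat H1 Hl).
have d2 := closed_dvd (reach_cat H2 Hl).
apply/eqP; rewrite -(eqn_modDr l); apply/eqP.
by move: d1 d2; rewrite /dvdn => /eqP -> /eqP ->.
Qed.

Lemma scc_reach v : v \in scc E r0 -> exists n, reach n r0 v.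
Proof. by rewrite in_scc => /andP [_ /connect_reach]. Qed.

Lemma G2 u v m : E u v -> v \in scc E r0 -> (ph u m <-> ph v m.+1).
Proof.
move=> Euv vS; have uS : u \in scc E r0 := root_pred r0V Euv vS.
split.
  case=> n [Hn Hnm]; exists n.+1; split; first by exists u.
  by rewrite -(addn1 n) -(addn1 m) -modnDml Hnm modnDml.
case=> n' [Hn' Hm]; have [n Hn] := scc_reach uS.
exists n; split => //.
have Hn1 : reach n.+1 r0 v by exists u.
have := G1 vS Hn1 Hn'; rewrite Hm -(addn1 n) -(addn1 m) => /eqP; rewrite eqn_modDr => /eqP.
done.
Qed.

Hypothesis Hpred : forall v, exists u, E u v.

Lemma G3 m : (exists2 v, v \in scc E r0 & ph v m) /\
             (exists2 v, v \in scc E r0 & ~ ph v m).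
Proof.
have [u Eu] := Hpred r0.
have uS : u \in scc E r0 := root_pred r0V Eu (scc_refl r0).
have [l Hl] := scc_reach uS.
have Hc : reach l.+1 r0 r0 by exists u.
have Hbig : reach (m.+1 * l.+1) r0 r0 by apply: reach_mul.
have m1le : (m.+1 <= m.+1 * l.+1)%N by rewrite leq_pmulr.
have mle : (m <= m.+1 * l.+1)%N := ltnW m1le.
have inS w j : reach j r0 w -> reach (m.+1 * l.+1 - j) w r0 -> w \in scc E r0.
  by move=> /reach_connect a /reach_connect b; rewrite in_scc a b.
split.
  have [w [H1 H2]] := reach_split mle Hbig.
  by exists w; [exact: inS H1 H2 | exists m].
have [w [H1 H2]] := reach_split m1le Hbig.
exists w; first exact: inS H1 H2.
case=> n [Hn Hnm]; have := G1 (inS _ _ H1 H2) Hn H1.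
rewrite Hnm -addn1 -{1}(addn0 m) => /eqP; rewrite eqn_modDl.
by rewrite mod0n modn_small.
Qed.

End Periodic.

End G.
Local Open Scope ring_scope.

Set Implicit Arguments. Unset Strict Implicit.

Section Vec.
Variable R : realType.

Lemma seed_eq k (x : 'I_k -> R) : (0 < k)%N ->
  exists j, head 0 [seq x j | j <- enum 'I_k] = x j.
Proof.
move=> k0; case Hen: (enum 'I_k) => [|j s].
  by move: (size_enum_ord k); rewrite Hen /= => k0'; rewrite -k0' in k0.
by exists j.
Qed.

Lemma vmin_le k (x : 'I_k -> R) j : vmin x <= x j.
Proof. exact: bigmin_le. Qed.

Lemma vmax_ge k (x : 'I_k -> R) j : x j <= vmax x.
Proof. exact: le_bigmax. Qed.

Lemma vmin_ge k (x : 'I_k -> R) c : (0 < k)%N -> (forall j, c <= x j) -> c <= vmin x.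
Proof.
move=> k0 H; have [j0 Hj0] := seed_eq x k0.
apply: le_bigmin => //; by rewrite Hj0.
Qed.

Lemma vmax_le k (x : 'I_k -> R) c : (0 < k)%N -> (forall j, x j <= c) -> vmax x <= c.
Proof.
move=> k0 H; have [j0 Hj0] := seed_eq x k0.
apply: bigmax_le => //; by rewrite Hj0.
Qed.

Lemma vmin_ex k (x : 'I_k -> R) : (0 < k)%N -> exists j, vmin x = x j.
Proof.
move=> k0; have [j0 Hj0] := seed_eq x k0.
rewrite /vmin; elim/big_ind: _ => //; first by exists j0.
move=> a b [ja ->] [jb ->]; case: (leP (x ja) (x jb)) => H.
  by exists ja.
  by exists jb.
by move=> i _; exists i.
Qed.

Lemma vmax_ex k (x : 'I_k -> R) : (0 < k)%N -> exists j, vmax x = x j.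
Proof.
move=> k0; have [j0 Hj0] := seed_eq x k0.
rewrite /vmax; elim/big_ind: _ => //; first by exists j0.
move=> a b [ja ->] [jb ->]; case: (leP (x ja) (x jb)) => H.
  by exists jb.
  by exists ja.
by move=> i _; exists i.
Qed.

Lemma vmin_le_vmax k (x : 'I_k -> R) : (0 < k)%N -> vmin x <= vmax x.
Proof. move=> k0; exact: le_trans (vmin_le x (Ordinal k0)) (vmax_ge x _). Qed.

Lemma mean_const (I : R -> Prop) k (M : ('I_k -> R) -> R) (z : 'I_k -> R) c :
  (0 < k)%N -> is_mean I M -> inI I z -> (forall j, z j = c) -> M z = c.
Proof.
move=> k0 HM Iz Hz; have [_ [H1 H2]] := HM z Iz.
have [j1 e1] := vmin_ex z k0; have [j2 e2] := vmax_ex z k0.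
rewrite e1 Hz in H1; rewrite e2 Hz in H2; apply/eqP; rewrite eq_le H1 H2 //.
Qed.

End Vec.

Unset Implicit Arguments.

Lemma sup_props (R : realType) (u : nat -> R) (B : R) : (forall n, u n <= B) ->
  (forall n, u n <= sup (range u)) /\
  (forall c, (forall n, u n <= c) -> sup (range u) <= c).
Proof.
move=> HB; have hub : has_ubound (range u).
  by exists B => y [n _ <-].
split.
  by move=> n; apply: ub_le_sup => //; exists n.
move=> c Hc; apply: ge_sup; first by exists (u 0%N), 0%N.
by move=> y [n _ <-].
Qed.

Arguments sup_props {R u B}.

Section Dyn.
Variable R : realType.
Variable I : R -> Prop.
Variable p : nat.
Variable d : 'I_p -> nat.
Variable alpha : forall i : 'I_p, 'I_(d i) -> 'I_p.
Variable M : forall i : 'I_p, ('I_(d i) -> R) -> R.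
Hypothesis HI : is_interval I.
Hypothesis Hp : (0 < p)%N.
Hypothesis Hd : forall i, (0 < d i)%N.
Hypothesis Hs : forall i : 'I_p, is_strict_mean I (M i).
Hypothesis Hc : forall i : 'I_p, continuous_on_Ik I (M i).

Set Implicit Arguments. Unset Strict Implicit.
Local Notation F := (Malpha M alpha).
Definition Fn n x := iter n F x.

Lemma Hm (i : 'I_p) : is_mean I (M i).
Proof. exact: (Hs i).1. Qed.

Lemma I_conv a b c : I a -> I b -> a <= c -> c <= b -> I c.
Proof. by case: HI => H _ Ia Ib ac cb; exact: H Ia Ib ac cb. Qed.

Lemma inI_F x : inI I x -> inI I (F x).
Proof.
move=> Ix i; have := @Hm i (fun j => x (alpha i j)).
by case=> [j|H _]; [exact: Ix | exact: H].
Qed.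

Lemma inI_Fn n x : inI I x -> inI I (Fn n x).
Proof. by move=> Ix; elim: n => //= n IH; exact: inI_F. Qed.

Lemma FnS n x : Fn n.+1 x = F (Fn n x).
Proof. by []. Qed.

Lemma FnSr n x : Fn n.+1 x = Fn n (F x).
Proof. by rewrite /Fn iterSr. Qed.

Lemma vmin_F x : inI I x -> vmin x <= vmin (F x).
Proof.
move=> Ix; apply: vmin_ge Hp _ => i.
have [_ [H _]] := @Hm i (fun j => x (alpha i j)) (fun j => Ix (alpha i j)).
apply: le_trans H; apply: vmin_ge (Hd i) _ => j; exact: vmin_le.
Qed.

Lemma vmax_F x : inI I x -> vmax (F x) <= vmax x.
Proof.
move=> Ix; apply: vmax_le Hp _ => i.
have [_ [_ H]] := @Hm i (fun j => x (alpha i j)) (fun j => Ix (alpha i j)).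
apply: le_trans H _; apply: vmax_le (Hd i) _ => j; exact: vmax_ge.
Qed.

Definition a x n := vmin (Fn n x).
Definition b x n := vmax (Fn n x).

Lemma a_mono x : inI I x -> forall n m, (n <= m)%N -> a x n <= a x m.
Proof.
move=> Ix n m /subnK <-; elim: (m - n)%N => [|k IH]; first by rewrite add0n.
apply: le_trans IH _; rewrite addSn /a FnS; apply: vmin_F; exact: inI_Fn.
Qed.

Lemma b_mono x : inI I x -> forall n m, (n <= m)%N -> b x m <= b x n.
Proof.
move=> Ix n m /subnK <-; elim: (m - n)%N => [|k IH]; first by rewrite add0n.
apply: le_trans _ IH; rewrite addSn /b FnS; apply: vmax_F; exact: inI_Fn.
Qed.

Lemma a_le_b x n m : inI I x -> a x n <= b x m.
Proof.
move=> Ix; apply: le_trans (a_mono Ix (leq_maxl n m)) _.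
apply: le_trans _ (b_mono Ix (leq_maxr n m)).
exact: vmin_le_vmax.
Qed.

Definition K1 x := sup (range (a x)).
Definition K2 x := - sup (range (fun n => - b x n)).

Lemma K1_bounds x : inI I x -> forall n, a x n <= K1 x /\ K1 x <= b x n.
Proof.
move=> Ix n; have [H1 H2] := sup_props (fun m => a_le_b m 0%N Ix).
split; first exact: H1.
apply: H2 => m; exact: a_le_b.
Qed.

Lemma K1_le x c : inI I x -> (forall n, a x n <= c) -> K1 x <= c.
Proof.
move=> Ix; have [_ H2] := sup_props (fun m => a_le_b m 0%N Ix); exact: H2.
Qed.

Lemma K2_bounds x : inI I x -> forall n, a x n <= K2 x /\ K2 x <= b x n.
Proof.
move=> Ix n.
have [H1 H2] := sup_props (u := fun m => - b x m) (B := - a x 0%N)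
  (fun m => ltac:(rewrite lerN2; exact: a_le_b)).
split; last by rewrite /K2 lerNl; exact: H1.
rewrite /K2 lerNr; apply: H2 => m; rewrite lerN2; exact: a_le_b.
Qed.

Lemma K2_ge x c : inI I x -> (forall n, c <= b x n) -> c <= K2 x.
Proof.
move=> Ix Hcb.
have [H1 H2] := sup_props (u := fun m => - b x m) (B := - a x 0%N)
  (fun m => ltac:(rewrite lerN2; exact: a_le_b)).
rewrite /K2 lerNr; apply: H2 => m; rewrite lerN2; exact: Hcb.
Qed.

Lemma a_shift x n : a (F x) n = a x n.+1.
Proof. by rewrite /a FnSr. Qed.

Lemma b_shift x n : b (F x) n = b x n.+1.
Proof. by rewrite /b FnSr. Qed.

Lemma K1_inv : is_invariant I F K1.
Proof.
move=> x Ix; have IFx := inI_F Ix; apply/eqP; rewrite eq_le; apply/andP; split.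
  apply: K1_le => // n; rewrite a_shift; exact: (K1_bounds Ix _).1.
apply: K1_le => // n; apply: le_trans (a_mono Ix (leqnSn n)) _.
rewrite -a_shift; exact: (K1_bounds IFx _).1.
Qed.

Lemma K2_inv : is_invariant I F K2.
Proof.
move=> x Ix; have IFx := inI_F Ix; apply/eqP; rewrite eq_le; apply/andP; split.
  apply: K2_ge => // n; apply: le_trans _ (b_mono Ix (leqnSn n)).
  rewrite -b_shift; exact: (K2_bounds IFx _).2.
apply: K2_ge => // n; rewrite b_shift; exact: (K2_bounds Ix _).2.
Qed.

Lemma mean_of_bounds (K : ('I_p -> R) -> R) :
  (forall x, inI I x -> a x 0%N <= K x /\ K x <= b x 0%N) -> is_mean I K.
Proof.
move=> H x Ix; have [H1 H2] := H x Ix; split => //.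
have [j1 e1] := vmin_ex x Hp; have [j2 e2] := vmax_ex x Hp.
apply: I_conv (Ix j1) (Ix j2) _ _; first by rewrite -e1.
by rewrite -e2.
Qed.

Lemma K1_mean : is_mean I K1.
Proof. apply: mean_of_bounds => x Ix; exact: K1_bounds. Qed.

Lemma K2_mean : is_mean I K2.
Proof. apply: mean_of_bounds => x Ix; exact: K2_bounds. Qed.

Lemma inv_bounds K : is_mean I K -> is_invariant I F K ->
  forall x, inI I x -> forall n, a x n <= K x /\ K x <= b x n.
Proof.
move=> HK Hinv x Ix n.
have -> : K x = K (Fn n x).
  elim: n => // n IH; rewrite FnS Hinv //; exact: inI_Fn.
by have [_ H] := HK _ (inI_Fn n Ix).
Qed.


Lemma fin_delta (T : finType) (P : T -> R -> Prop) :
  (forall t δ δ', 0 < δ' -> δ' <= δ -> P t δ -> P t δ') ->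
  (forall t, exists2 δ, 0 < δ & P t δ) -> exists2 δ, 0 < δ & forall t, P t δ.
Proof.
move=> Hmono Hex.
suff H : forall s : seq T, exists2 δ, 0 < δ & forall t, t \in s -> P t δ.
  by have [δ δ0 Hδ] := H (enum T); exists δ => // t; apply: Hδ; rewrite mem_enum.
elim=> [|t s [δ δ0 Hδ]]; first by exists 1.
have [δ1 δ10 Hδ1] := Hex t.
case: (leP δ δ1) => H.
  exists δ => // t'; rewrite in_cons => /orP [/eqP ->|]; last exact: Hδ.
  exact: Hmono Hδ1.
exists δ1 => // t'; rewrite in_cons => /orP [/eqP ->|] //.
move=> ts; apply: Hmono (Hδ _ ts) => //; exact: ltW.
Qed.

Lemma contF x : inI I x -> forall e, 0 < e -> exists2 δ, 0 < δ &
  forall z, inI I z -> (forall j, `|z j - x j| < δ) -> forall i, `|F z i - F x i| < e.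
Proof.
move=> Ix e e0.
have := @fin_delta 'I_p (fun i δ => forall z, inI I z -> (forall j, `|z j - x j| < δ) ->
   `|F z i - F x i| < e).
case.
- move=> i δ δ' δ'0 le H z Iz Hz; apply: H => // j; exact: lt_le_trans (Hz j) le.
- move=> i; have [δ δ0 Hδ] := Hc i _ (fun j => Ix (alpha i j)) e e0.
  exists δ => // z Iz Hz; apply: Hδ; first by move=> j; exact: Iz.
  by move=> j; exact: Hz.
by move=> δ δ0 Hδ; exists δ => // z Iz Hz i; exact: Hδ.
Qed.

Lemma contFn n x : inI I x -> forall e, 0 < e -> exists2 δ, 0 < δ &
  forall z, inI I z -> (forall j, `|z j - x j| < δ) -> forall i, `|Fn n z i - Fn n x i| < e.
Proof.
move=> Ix; elim: n => [|n IH] e e0; first by exists e.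
have [δ1 δ10 H1] := contF (inI_Fn n Ix) e0.
have [δ δ0 H] := IH δ1 δ10.
exists δ => // z Iz Hz i; rewrite !FnS; apply: H1; first exact: inI_Fn.
exact: H.
Qed.

Lemma Fn_add m n x : Fn (m + n) x = Fn m (Fn n x).
Proof. by rewrite /Fn iterD. Qed.

Lemma strict_prop y : inI I y -> forall n r i, reach (incidence_rel alpha) n r i ->
  Fn n y i = vmin y -> y r = vmin y.
Proof.
move=> Iy; elim=> [|n IH] r i /=; first by move=> -> .
case=> w [Hw /existsP [j0 /eqP Hj0]] Hi.
apply: (IH r w Hw); rewrite -Hj0.
set c := vmin y in Hi *.
set z := fun j => Fn n y (alpha i j).
have Iz : inI I z by move=> j; exact: inI_Fn.
have zc : forall j, c <= z j.
  move=> j; apply: le_trans (vmin_le _ (alpha i j)).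
  have := a_mono Iy (leq0n n); by rewrite /a.
have HM : M i z = c by rewrite -Hi.
case: (pselect (nonconstant z)) => Hnc.
  have [H1 _] := (Hs i).2 z Iz Hnc.
  have : c <= vmin z by apply: vmin_ge (Hd i) zc.
  by rewrite HM in H1; move=> H2; have := lt_le_trans H1 H2; rewrite ltxx.
have Hz : forall j, z j = z j0.
  move=> j; case: (eqVneq (z j) (z j0)) => // Hne; exfalso; apply: Hnc; by exists j, j0.
by rewrite -HM (mean_const (Hd i) (@Hm i) Iz Hz).
Qed.

Lemma strict_prop_max y : inI I y -> forall n r i, reach (incidence_rel alpha) n r i ->
  Fn n y i = vmax y -> y r = vmax y.
Proof.
move=> Iy; elim=> [|n IH] r i /=; first by move=> -> .
case=> w [Hw /existsP [j0 /eqP Hj0]] Hi.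
apply: (IH r w Hw); rewrite -Hj0.
set c := vmax y in Hi *.
set z := fun j => Fn n y (alpha i j).
have Iz : inI I z by move=> j; exact: inI_Fn.
have zc : forall j, z j <= c.
  move=> j; apply: le_trans (vmax_ge _ (alpha i j)) _.
  have := b_mono Iy (leq0n n); by rewrite /b.
have HM : M i z = c by rewrite -Hi.
case: (pselect (nonconstant z)) => Hnc.
  have [_ H1] := (Hs i).2 z Iz Hnc.
  have : vmax z <= c by apply: vmax_le (Hd i) zc.
  by rewrite HM in H1; move=> H2; have := lt_le_trans H1 H2; rewrite ltxx.
have Hz : forall j, z j = z j0.
  move=> j; case: (eqVneq (z j) (z j0)) => // Hne; exfalso; apply: Hnc; by exists j, j0.
by rewrite -HM (mean_const (Hd i) (@Hm i) Iz Hz).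
Qed.

Lemma gap (Herg : ergodic (root_set (incidence_rel alpha)) (incidence_rel alpha)) x :
  inI I x -> forall e, 0 < e -> exists n, b x n - a x n < e.
Proof.
move=> Ix.
pose u := fun n => Fn n x.
have bnd : forall n j, `|u n j| <= `|a x 0%N| + `|b x 0%N|.
  move=> n j.
  have h1 : a x 0%N <= u n j := le_trans (a_mono Ix (leq0n n)) (vmin_le _ j).
  have h2 : u n j <= b x 0%N := le_trans (vmax_ge _ j) (b_mono Ix (leq0n n)).
  have n1 := ler_norm (- a x 0%N); have n2 := ler_norm (b x 0%N).
  have n3 := normr_ge0 (a x 0%N); have n4 := normr_ge0 (b x 0%N).
  rewrite normrN in n1.
  rewrite ler_norml; apply/andP; split; lra.
have [y Hy] := @bwv R _ u _ bnd.
have C1 : forall n j, a x n <= y j.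
  move=> n j; rewrite leNgt; apply/negP => H.
  have [m [nm Hm']] := Hy (a x n - y j) (ltac:(by rewrite subr_gt0)) n.
  have h : a x n <= u m j := le_trans (a_mono Ix nm) (vmin_le _ j).
  have := ler_norm (u m j - y j); have := Hm' j; lra.
have C2 : forall n j, y j <= b x n.
  move=> n j; rewrite leNgt; apply/negP => H.
  have [m [nm Hm']] := Hy (y j - b x n) (ltac:(by rewrite subr_gt0)) n.
  have h : u m j <= b x n := le_trans (vmax_ge _ j) (b_mono Ix nm).
  have := ler_norm (- (u m j - y j)); rewrite normrN; have := Hm' j; lra.
have Iy : inI I y.
  move=> j; have [j1 e1] := vmin_ex x Hp; have [j2 e2] := vmax_ex x Hp.
  apply: I_conv (Ix j1) (Ix j2) _ _.
    by rewrite -e1; exact: C1 0%N j.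
  by rewrite -e2; exact: C2 0%N j.
have ya : forall n, a x n <= vmin y by move=> n; exact: vmin_ge Hp (C1 n).
have yb : forall n, vmax y <= b x n by move=> n; exact: vmax_le Hp (fun j => C2 n j).
have L : forall k, exists i, Fn k y i = vmin y.
  move=> k; have hge : vmin y <= vmin (Fn k y) := a_mono Iy (leq0n k).
  case: (eqVneq (vmin (Fn k y)) (vmin y)) => [eq|neq].
    by have [i ei] := vmin_ex (Fn k y) Hp; exists i; rewrite -ei eq.
  exfalso.
  have gt : vmin y < vmin (Fn k y) by rewrite lt_neqAle eq_sym neq hge.
  have g0 : 0 < (vmin (Fn k y) - vmin y) / 2 by rewrite divr_gt0 // subr_gt0.
  have [δ δ0 Hδ] := contFn k Iy g0.
  have [n [_ Hn]] := Hy δ δ0 0%N.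
  have Hcl := Hδ (u n) (inI_Fn n Ix) Hn.
  have [i ei] := vmin_ex (Fn (k + n) x) Hp.
  have h1 := ya (k + n)%N; rewrite /a ei in h1.
  have h2 := Hcl i; rewrite /u -Fn_add ltr_norml in h2; case/andP: h2 => h2 _.
  have h3 := vmin_le (Fn k y) i.
  lra.
have U : forall k, exists i, Fn k y i = vmax y.
  move=> k; have hge : vmax (Fn k y) <= vmax y := b_mono Iy (leq0n k).
  case: (eqVneq (vmax (Fn k y)) (vmax y)) => [eq|neq].
    by have [i ei] := vmax_ex (Fn k y) Hp; exists i; rewrite -ei eq.
  exfalso.
  have gt : vmax (Fn k y) < vmax y by rewrite lt_neqAle neq hge.
  have g0 : 0 < (vmax y - vmax (Fn k y)) / 2 by rewrite divr_gt0 // subr_gt0.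
  have [δ δ0 Hδ] := contFn k Iy g0.
  have [n [_ Hn]] := Hy δ δ0 0%N.
  have Hcl := Hδ (u n) (inI_Fn n Ix) Hn.
  have [i ei] := vmax_ex (Fn (k + n) x) Hp.
  have h1 := yb (k + n)%N; rewrite /b ei in h1.
  have h2 := Hcl i; rewrite /u -Fn_add ltr_norml in h2; case/andP: h2 => _ h2.
  have h3 := vmax_ge (Fn k y) i.
  lra.
have [r0 r0V Hprim] := primitive Herg.
have [N HN] := Hprim (enum 'I_p).
have [i1 e1] := L N; have [i2 e2] := U N.
have y1 := strict_prop Iy (HN N (leqnn N) i1 (mem_enum _ _)) e1.
have y2 := strict_prop_max Iy (HN N (leqnn N) i2 (mem_enum _ _)) e2.
have yc : forall j, y j = vmin y.
  move=> j; have := vmin_le y j; have := vmax_ge y j; lra.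
move=> e e0.
have e20 : 0 < e / 2 by rewrite divr_gt0.
have [n [_ Hn]] := Hy (e / 2) e20 0%N.
have [j1 f1] := vmin_ex (u n) Hp; have [j2 f2] := vmax_ex (u n) Hp.
exists n; rewrite /a /b.
have -> : vmin (Fn n x) = u n j1 by exact: f1.
have -> : vmax (Fn n x) = u n j2 by exact: f2.
have := Hn j1; have := Hn j2; rewrite !yc !ltr_norml => /andP [h1 h2] /andP [h3 h4].
lra.
Qed.

Local Notation E := (incidence_rel alpha).
Local Notation V := (root_set (incidence_rel alpha)).

Lemma edge_alpha v j : E (alpha v j) v.
Proof. by apply/existsP; exists j. Qed.

Lemma closed_const (S : pred 'I_p) c x : I c ->
  (forall u v, E u v -> v \in S -> u \in S) ->
  (forall v, v \in S -> x v = c) -> forall n v, v \in S -> Fn n x v = c.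
Proof.
move=> Ic HS Hx; elim=> [|n IH] v vS; first exact: Hx.
rewrite FnS /=; apply: (mean_const (Hd v) (@Hm v)).
  by move=> j; rewrite IH //; apply: HS vS; exact: edge_alpha.
by move=> j; apply: IH; apply: HS vS; exact: edge_alpha.
Qed.

Lemma no_two_means (K : ('I_p -> R) -> R) :
  is_mean I K -> is_invariant I F K ->
  (forall K', is_mean I K' -> is_invariant I F K' -> forall x, inI I x -> K' x = K x) ->
  forall x, inI I x -> forall al be, al < be ->
  (forall n, a x n <= al) -> (forall n, be <= b x n) -> False.
Proof.
move=> HK Hinv Hu x Ix al be ab Ha Hb.
have h1 := Hu _ K1_mean K1_inv x Ix.
have h2 := Hu _ K2_mean K2_inv x Ix.
have h3 := K1_le Ix Ha; have h4 := K2_ge Ix Hb.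
lra.
Qed.

Lemma uniq_from_gap x c1 c2 :
  (forall n, a x n <= c1 /\ c1 <= b x n) -> (forall n, a x n <= c2 /\ c2 <= b x n) ->
  (forall e, 0 < e -> exists n, b x n - a x n < e) -> c1 = c2.
Proof.
move=> H1 H2 Hg; apply/eqP; rewrite eq_le; apply/andP; split.
  rewrite leNgt; apply/negP => H.
  have [n Hn] := Hg (c1 - c2) (ltac:(by rewrite subr_gt0)).
  have := H1 n; have := H2 n; lra.
rewrite leNgt; apply/negP => H.
have [n Hn] := Hg (c2 - c1) (ltac:(by rewrite subr_gt0)).
have := H1 n; have := H2 n; lra.
Qed.

Lemma root_nonempty : V != finset.set0.
Proof.
apply/set0Pn; have [r rV _] := exists_root_anc E (Ordinal Hp); by exists r.
Qed.

Lemma main_iff :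
  ((exists K : ('I_p -> R) -> R,
      is_mean I K /\ is_invariant I F K /\
      (forall K' : ('I_p -> R) -> R,
         is_mean I K' -> is_invariant I F K' ->
         forall x, inI I x -> K' x = K x))
   <-> ergodic V E).
Proof.
split; last first.
  move=> Herg; exists K1; split; first exact: K1_mean.
  split; first exact: K1_inv.
  move=> K' HK' Hinv' x Ix; apply: (uniq_from_gap (x := x)).
  - exact: inv_bounds.
  - exact: K1_bounds.
  - exact: gap.
case=> K [HK [Hinv Hu]].
have [al [be [Ial [Ibe ab]]]] := HI.2.
have Hbad := no_two_means HK Hinv Hu.
split; first exact: root_nonempty.
- apply: NNPP => Hirr.
  have [a0 /not_all_ex_not [b0 Hn]] := not_all_ex_not _ _ Hirr.
  have [a0V H'] := imply_to_and _ _ Hn.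
  have [b0V Hnw] := imply_to_and _ _ H'.
  have nc := not_irr b0V Hnw.
  pose x := fun v => if v \in scc E a0 then al else be.
  have Ix : inI I x by move=> v; rewrite /x; case: ifP.
  apply: (Hbad x Ix al be ab) => n.
    apply: le_trans (vmin_le _ a0) _.
    rewrite (closed_const (S := mem (scc E a0)) (c := al) Ial) //.
    + by move=> u v Euv vS; exact: root_pred a0V Euv vS.
    + by move=> v vS; rewrite /x vS.
    + exact: scc_refl.
  apply: le_trans (vmax_ge _ b0).
  rewrite (closed_const (S := mem (scc E b0)) (c := be) Ibe) //.
  + by move=> u v Euv vS; exact: root_pred b0V Euv vS.
  + move=> v vS; rewrite /x; case: ifP => // vA; exfalso; exact: scc_disj nc vA vS.
  + exact: scc_refl.
- move=> k k1; apply: NNPP => Hk.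
  have Hper : forall a0 s, walk_in V E a0 s -> last a0 s = a0 -> (0 < size s)%N ->
      (k %| size s)%N.
    move=> a0 s Hw Hl Hs'; apply: NNPP => Hd'; apply: Hk; exists a0, s; split => //.
    by apply/negP.
  have [r0 r0V] := set0Pn _ root_nonempty.
  have Hpred : forall v, exists u, E u v by move=> v; exists (alpha v (Ordinal (Hd v))); exact: edge_alpha.
  pose x := fun v => if pselect (ph E k r0 v 0) then be else al.
  have Ix : inI I x by move=> v; rewrite /x; case: pselect.
  have Hdyn : forall n v, v \in scc E r0 ->
      (ph E k r0 v n -> Fn n x v = be) /\ (~ ph E k r0 v n -> Fn n x v = al).
    elim=> [|n IH] v vS.
      by split => H; rewrite /= /x; case: pselect.
    have HG u : E u v -> (ph E k r0 u n <-> ph E k r0 v n.+1).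
      by move=> Euv; have := G2 Hper r0V n Euv vS.
    have uS j : alpha v j \in scc E r0 by exact: root_pred r0V (@edge_alpha v j) vS.
    split => H; rewrite FnS /=; apply: (mean_const (Hd v) (@Hm v)).
    + by move=> j; apply: inI_Fn.
    + move=> j; apply: (IH _ (uS j)).1; apply/(HG _ (@edge_alpha v j)); exact: H.
    + by move=> j; apply: inI_Fn.
    + move=> j; apply: (IH _ (uS j)).2 => H'; apply: H; apply/(HG _ (@edge_alpha v j)); exact: H'.
  apply: (Hbad x Ix al be ab) => n; have [[v1 v1S P1] [v2 v2S P2]] := G3 k1 Hper r0V Hpred n.
    apply: le_trans (vmin_le _ v2) _; by rewrite ((Hdyn n v2 v2S).2 P2).
  apply: le_trans (vmax_ge _ v1); by rewrite ((Hdyn n v1 v1S).1 P1).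
Qed.

End Dyn.

Unset Implicit Arguments.

Theorem theorem3p3 (R : realType) (I : R -> Prop) (p : nat) (d : 'I_p -> nat)
  (alpha : forall i : 'I_p, 'I_(d i) -> 'I_p)
  (M : forall i : 'I_p, ('I_(d i) -> R) -> R) :
  is_interval I -> (0 < p)%N -> (forall i, 0 < d i)%N ->
  (forall i, is_strict_mean I (M i)) ->
  (forall i, continuous_on_Ik I (M i)) ->
  ((exists K : ('I_p -> R) -> R,
      is_mean I K /\ is_invariant I (Malpha M alpha) K /\
      (forall K' : ('I_p -> R) -> R,
         is_mean I K' -> is_invariant I (Malpha M alpha) K' ->
         forall x, inI I x -> K' x = K x))
   <->
   ergodic (root_set (incidence_rel alpha)) (incidence_rel alpha)).
Proof.
move=> HI Hp Hd Hs Hc.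
exact: (@main_iff R I p d alpha M HI Hp Hd Hs Hc).
Qed.
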